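(* Let $G$ be a finite group, let $s \in G^{\#}$ and let $H \in \mathcal{M}(G,s)$ with $b(G,G/H) = b$. Then any total dominating set for $\Gamma(G)$ consisting only of conjugates of $s$ has size at least $b$.
   Context: $G^{\#}$ is the set of non-identity elements of $G$. The generating graph $\Gamma(G)$ has vertex set $G^{\#}$, with $x,y$ adjacent iff $G=\langle x,y\rangle$. A subset $S\subseteq G^{\#}$ is a total dominating set for $\Gamma(G)$ if for every $g\in G^{\#}$ there exists $s\in S$ with $G=\langle g,s\rangle$. $\mathcal{M}(G,g)$ denotes the set of maximal subgroups of $G$ containing $g$. For a group acting faithfully on a finite set $\Omega$, a base is a subset of $\Omega$ whose pointwise stabiliser is trivial and $b(G,\Omega)$ is the minimal size of a base; here $G$ acts on the coset space $G/H$, and $b(G,G/H)\leqslant c$ iff there exist $g_1,\dots,g_c\in G$ with $\bigcap_i H^{g_i}=1$. *)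

(* Defs.v *)
From mathcomp Require Import all_boot all_fingroup all_solvable.
Set Implicit Arguments. Unset Strict Implicit. Unset Printing Implicit Defensive.
Local Open Scope group_scope.

(* Adjacency in the generating graph Gamma(G): G = <x, y>. *)
Definition generates (gT : finGroupType) (G : {set gT}) (x y : gT) : bool :=
  <<[set x; y]>> == G.

Definition total_dominating (gT : finGroupType) (G : {set gT}) (S : {set gT}) : Prop :=
  S \subset G^# /\ forall g, g \in G^# -> exists2 s, s \in S & generates G g s.

(* A base for the action of G on the coset space G/H (right cosets Hx, with G
   acting by right multiplication 'Rs): a set B of cosets whose pointwise
   stabiliser in G is trivial. *)
Definition is_base (gT : finGroupType) (G H : {group gT}) (B : {set {set gT}}) : bool :=
  (B \subset rcosets H G) && ('C_G(B | 'Rs) == 1).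

Definition base_size (gT : finGroupType) (G H : {group gT}) (b : nat) : Prop :=
  (exists2 B, is_base G H B & #|B| = b) /\
  (forall B, is_base G H B -> b <= #|B|).

(* Main.v *)
Require Import Defs.
From mathcomp Require Import all_boot all_fingroup all_solvable.
Local Open Scope group_scope.

Theorem corollary2p3 (gT : finGroupType) (G H : {group gT}) (s : gT) (b : nat) :
  s \in G^# -> maximal H G -> s \in H -> base_size G H b ->
  forall S : {set gT}, S \subset s ^: G -> total_dominating G S -> b <= #|S|.
Proof.
move=> sG maxH sH [_ hb] S sS [_ hdom].
pose pk t := odflt 1 [pick g in G | s ^ g == t].
have pkP : forall t, t \in S -> pk t \in G /\ s ^ pk t = t.
  move=> t tS; have := subsetP sS t tS; case/imsetP=> g gG ->.
  rewrite /pk; case: pickP => [h /andP [hG /eqP e] | /(_ g)]; first by split.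
  by rewrite gG eqxx.
pose B := (fun t => H :* pk t) @: S.
have HG : H \proper G := maxgroupp maxH.
suff bB : is_base G H B by exact: leq_trans (hb B bB) (leq_imset_card _ _).
apply/andP; split.
  apply/subsetP=> C /imsetP [t tS ->]; apply/imsetP; exists (pk t); last by rewrite rcosetE.
  by case: (pkP t tS).
apply/eqP; apply/trivgP; apply/subsetP=> x /setIP [xG xC].
apply/set1P; apply/eqP; apply/negPn/negP=> x1.
have xG' : x \in G^# by rewrite !inE x1.
case: (hdom x xG') => t tS gen.
case: (pkP t tS) => gG est.
have xHg : x \in H :^ pk t.
  have : H :* pk t \in B by apply: imset_f.
  move/(astabP xC) => /= e.
  have : pk t * x \in H :* pk t by rewrite -e rcosetE -rcosetM rcoset_refl.
  by rewrite mem_rcoset mem_conjg conjgE invgK mulgA.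
have tHg : t \in H :^ pk t by rewrite -{1}est memJ_conjg.
have : G \subset H :^ pk t.
  move/eqP: gen => <-; rewrite gen_subG; apply/subsetP=> y.
  by case/set2P=> ->.
move/subset_leq_card; rewrite cardJg.
by move/proper_card: HG; rewrite ltnNge => /negP.
Qed.
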